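(* Let $d>1$ be an integer, let $E,F$ be non-isogenous complex elliptic curves, and let $P\in E[d]$ and $Q\in F[d]$ be points of order exactly $d$. Assume that $E/\langle P\rangle$ is not isomorphic to $E$ or that $F/\langle Q\rangle$ is not isomorphic to $F$. Then the abelian surface $A=(E\times F)/\langle (P,Q)\rangle$, endowed with the polarisation of type $(1,d)$ descending from the product polarisation $\mathcal O_E(d\cdot 0)\boxtimes\mathcal O_F(d\cdot 0)$, is not isomorphic (as an abstract abelian variety) to its dual abelian surface $\hat A$.
   Context: $\hat A=\mathrm{Pic}^0(A)$ denotes the dual abelian variety. *)

(* Defs.v *)
From mathcomp Require Import all_boot all_algebra.
From mathcomp Require Import reals complex.
Set Implicit Arguments. Unset Strict Implicit. Unset Printing Implicit Defensive.
Import GRing.Theory Num.Theory.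
Local Open Scope ring_scope.

(* A complex torus of dimension g is C^g / L for a lattice L; complex elliptic
   curves are the tori C / L (dimension 1) and abelian surfaces are algebraic
   tori C^2 / L.  We work throughout with the lattices. *)

Definition reC {R : realType} (z : R[i]) : R := complex.Re z.
Definition imC {R : realType} (z : R[i]) : R := complex.Im z.

Definition is_integer {R : realType} (x : R) : Prop := exists k : int, x = k%:~R.

Definition lattice1 {R : realType} (w1 w2 : R[i]) : R[i] -> Prop :=
  fun z => exists a b : int, z = a%:~R * w1 + b%:~R * w2.

(* (w1, w2) is an R-basis of C, i.e. Z w1 + Z w2 is a lattice (full rank). *)
Definition lattice_basis {R : realType} (w1 w2 : R[i]) : Prop :=
  w1 != 0 /\ imC (w2 / w1) != 0.

(* Two elliptic curves C/L1, C/L2 are isogenous iff there is a nonzero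
   holomorphic homomorphism C/L1 -> C/L2, i.e. a nonzero a in C with a L1 ⊆ L2. *)
Definition isogenous1 {R : realType} (L1 L2 : R[i] -> Prop) : Prop :=
  exists a : R[i], a != 0 /\ forall z, L1 z -> L2 (a * z).

(* Isomorphism of the 1-dimensional tori C/L1 and C/L2:
   a in C^* with a L1 = L2. *)
Definition iso1 {R : realType} (L1 L2 : R[i] -> Prop) : Prop :=
  exists a : R[i], a != 0 /\ forall z, L2 z <-> exists y, L1 y /\ z = a * y.

(* p in C represents a point of C/L of order exactly d. *)
Definition has_order {R : realType} (L : R[i] -> Prop) (p : R[i]) (d : nat) : Prop :=
  L (d%:R * p) /\ forall k : nat, (0 < k < d)%N -> ~ L (k%:R * p).

(* The lattice L + Z p of the quotient elliptic curve (C/L)/<p>. *)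
Definition quot_lattice1 {R : realType} (L : R[i] -> Prop) (p : R[i]) : R[i] -> Prop :=
  fun z => exists y (k : int), L y /\ z = y + k%:~R * p.

Definition vec2 {R : realType} (x y : R[i]) : 'rV[R[i]]_2 :=
  \row_(j < 2) (if j == ord0 then x else y).

(* Lattice of A = (E x F)/<(P,Q)> with E = C/L1, F = C/L2 and P, Q represented
   by p, q: it is (L1 x L2) + Z (p, q) in C^2. *)
Definition quot_lattice2 {R : realType} (L1 L2 : R[i] -> Prop) (p q : R[i])
  : 'rV[R[i]]_2 -> Prop :=
  fun v => exists x y (k : int), L1 x /\ L2 y /\
      v = vec2 (x + k%:~R * p) (y + k%:~R * q).

(* The dual of V/L (V = C^2) is Vbar^* / L^, where
   Vbar^* is the space of C-antilinear forms V -> C and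
   L^ = { l | Im l(L) ⊆ Z }.  We identify Vbar^* C-linearly with C^2 via
   w |-> l_w, l_w(v) = w_1 conj(v_1) + w_2 conj(v_2). *)
Definition antilin_pair {R : realType} (w v : 'rV[R[i]]_2) : R[i] :=
  \sum_(j < 2) w 0 j * (v 0 j)^*.

Definition dual_lattice2 {R : realType} (L : 'rV[R[i]]_2 -> Prop)
  : 'rV[R[i]]_2 -> Prop :=
  fun w => forall v, L v -> is_integer (imC (antilin_pair w v)).

(* Isomorphism of complex tori C^2/L1 ≅ C^2/L2 (as complex Lie groups, hence,
   for abelian surfaces, as abelian varieties): an invertible C-linear map
   M of C^2 with M(L1) = L2. *)
Definition iso2 {R : realType} (L1 L2 : 'rV[R[i]]_2 -> Prop) : Prop :=
  exists M : 'M[R[i]]_2, M \in unitmx /\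
    forall v, L2 v <-> exists u, L1 u /\ v = u *m M.

(* Main.v *)
Require Import Defs.
From mathcomp Require Import all_boot all_algebra.
From mathcomp Require Import reals complex.
From mathcomp Require Import intdiv zify.
From mathcomp Require Import ring lra.
Import GRing.Theory Num.Theory.
Local Open Scope ring_scope.

Lemma conjE {R : realType} (z : R[i]) : Num.conj z = conjc z.
Proof. by case: z. Qed.

Lemma cReD {R : realType} (x y : R[i]) : complex.Re (x + y) = complex.Re x + complex.Re y.
Proof. by case: x; case: y. Qed.
Lemma cImD {R : realType} (x y : R[i]) : complex.Im (x + y) = complex.Im x + complex.Im y.
Proof. by case: x; case: y. Qed.
Lemma cReN {R : realType} (x : R[i]) : complex.Re (- x) = - complex.Re x.
Proof. by case: x. Qed.
Lemma cImN {R : realType} (x : R[i]) : complex.Im (- x) = - complex.Im x.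
Proof. by case: x. Qed.
Lemma cReM {R : realType} (x y : R[i]) : complex.Re (x * y) = complex.Re x * complex.Re y - complex.Im x * complex.Im y.
Proof. by case: x; case: y. Qed.
Lemma cImM {R : realType} (x y : R[i]) : complex.Im (x * y) = complex.Re x * complex.Im y + complex.Im x * complex.Re y.
Proof. by case: x => a b; case: y => c d /=; ring. Qed.
Lemma cReJ {R : realType} (x : R[i]) : complex.Re (conjc x) = complex.Re x.
Proof. by case: x. Qed.
Lemma cImJ {R : realType} (x : R[i]) : complex.Im (conjc x) = - complex.Im x.
Proof. by case: x. Qed.
Lemma intC {R : realType} (k : int) : (k%:~R : R[i]) = (k%:~R : R)%:C%C.
Proof. by rewrite -(rmorph_int (real_complex R)). Qed.
Lemma cRe_int {R : realType} (k : int) : complex.Re (k%:~R : R[i]) = k%:~R.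
Proof. by rewrite intC. Qed.
Lemma cIm_int {R : realType} (k : int) : complex.Im (k%:~R : R[i]) = 0.
Proof. by rewrite intC. Qed.
Lemma cRe_nat {R : realType} (k : nat) : complex.Re (k%:R : R[i]) = k%:R.
Proof. by rewrite -(rmorph_nat (real_complex R)). Qed.
Lemma cIm_nat {R : realType} (k : nat) : complex.Im (k%:R : R[i]) = 0.
Proof. by rewrite -(rmorph_nat (real_complex R)). Qed.
Lemma cRe_C {R : realType} (r : R) : complex.Re (r%:C%C) = r. Proof. by []. Qed.
Lemma cIm_C {R : realType} (r : R) : complex.Im (r%:C%C) = 0. Proof. by []. Qed.
Lemma ceq {R : realType} (x y : R[i]) : complex.Re x = complex.Re y -> complex.Im x = complex.Im y -> x = y.
Proof. by case: x; case: y => /= ? ? ? ? -> ->. Qed.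

Ltac cnorm := rewrite /imC /reC ?conjE; rewrite ?(cReD, cImD, cReN, cImN, cReM, cImM, cReJ, cImJ, cRe_int, cIm_int, cRe_nat, cIm_nat, cRe_C, cIm_C).


Lemma lat_lin {R : realType} (e1 e2 z w : R[i]) (a b : int) :
  lattice1 e1 e2 z -> lattice1 e1 e2 w -> lattice1 e1 e2 (a%:~R * z + b%:~R * w).
Proof.
move=> [a1 [b1 ->]] [a2 [b2 ->]].
exists (a*a1 + b*a2), (a*b1 + b*b2).
rewrite !(intrD, intrM); ring.
Qed.

Arguments lat_lin {R e1 e2 z w}.

Lemma lat_e1 {R : realType} (e1 e2 : R[i]) : lattice1 e1 e2 e1.
Proof. by exists 1, 0; rewrite mul1r mul0r addr0. Qed.
Lemma lat_e2 {R : realType} (e1 e2 : R[i]) : lattice1 e1 e2 e2.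
Proof. by exists 0, 1; rewrite mul1r mul0r add0r. Qed.
Lemma lat0 {R : realType} (e1 e2 : R[i]) : lattice1 e1 e2 0.
Proof. by exists 0, 0; rewrite !mul0r addr0. Qed.
Lemma latD {R : realType} (e1 e2 z w : R[i]) :
  lattice1 e1 e2 z -> lattice1 e1 e2 w -> lattice1 e1 e2 (z + w).
Proof. by move=> hz hw; have := lat_lin 1 1 hz hw; rewrite !mul1r. Qed.
Lemma latZ {R : realType} (e1 e2 z : R[i]) (a : int) :
  lattice1 e1 e2 z -> lattice1 e1 e2 (a%:~R * z).
Proof. by move=> hz; have := lat_lin a 0 hz hz; rewrite mul0r addr0. Qed.
Arguments latZ {R e1 e2 z}.

Lemma latN {R : realType} (e1 e2 z : R[i]) :
  lattice1 e1 e2 z -> lattice1 e1 e2 (- z).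
Proof. by move=> hz; have := latZ (-1) hz; rewrite mulN1r. Qed.

Lemma omega_lat {R : realType} (e1 e2 : R[i]) (a b c d : int) :
  imC ((a%:~R*e1 + b%:~R*e2) * Num.conj (c%:~R*e1+d%:~R*e2)) = (a*d - b*c)%:~R * imC(e1 * Num.conj e2).
Proof. cnorm. rewrite !(intrD, intrM, intrN). ring. Qed.

Lemma cramer {R : realType} (e1 e2 w : R[i]) :
  (imC (e1 * Num.conj e2))%:C%C * w = (imC (w * Num.conj e2))%:C%C * e1 - (imC (w * Num.conj e1))%:C%C * e2.
Proof. apply: ceq; cnorm; ring. Qed.

Lemma dual_in_lat {R : realType} (e1 e2 w : R[i]) :
  (forall y, lattice1 e1 e2 y -> is_integer (imC (w * Num.conj y))) ->
  lattice1 e1 e2 ((imC (e1 * Num.conj e2))%:C%C * w).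
Proof.
move=> h; rewrite cramer.
have [s hs] := h _ (lat_e2 e1 e2).
have [t ht] := h _ (lat_e1 e1 e2).
exists s, (-t); rewrite hs ht -!intC intrN; ring.
Qed.

Lemma basis_D {R : realType} (e1 e2 : R[i]) :
  lattice_basis e1 e2 -> imC (e1 * Num.conj e2) != 0.
Proof.
move=> [e10 hr].
have -> : e2 = (e2 / e1) * e1 by rewrite divfK.
move: hr; set r := e2 / e1 => hr.
have -> : imC (e1 * Num.conj (r * e1)) = - imC r * (complex.Re e1 ^+ 2 + complex.Im e1 ^+ 2).
  by cnorm; ring.
rewrite mulf_eq0 negb_or oppr_eq0 hr /=.
apply/negP => /eqP h0; move/negP: e10; apply.
have /andP[h1 h2] : (complex.Re e1 ^+ 2 == 0) && (complex.Im e1 ^+ 2 == 0).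
  by rewrite -paddr_eq0 ?sqr_ge0 // h0.
rewrite sqrf_eq0 in h1; rewrite sqrf_eq0 in h2.
by apply/eqP; apply: ceq; apply/eqP.
Qed.

Lemma natz_C {R : realType} (n : nat) : ((Posz n)%:~R : R[i]) = n%:R.
Proof. by []. Qed.

Lemma ord_dvd {R : realType} (e1 e2 p : R[i]) (d : nat) (k : int) :
  (0 < d)%N -> has_order (lattice1 e1 e2) p d ->
  lattice1 e1 e2 (k%:~R * p) -> (d%:Z %| k)%Z.
Proof.
move=> d0 [hd hk] hkp; apply/dvdz_mod0P.
have dn0 : (d%:Z != 0) by rewrite eqz_nat -lt0n.
have r0 := modz_ge0 k dn0; have rd := ltz_mod k dn0.
move: r0 rd; set r := (k %% d%:Z)%Z => r0 rd.
have hr : lattice1 e1 e2 (r%:~R * p).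
  have -> : r%:~R * p = k%:~R * p + (- (k %/ d%:Z)%Z)%:~R * (d%:R * p).
    have er : r = k - (k %/ d%:Z)%Z * d%:Z.
      have h := divz_eq k d%:Z; rewrite -/r in h.
      by apply/eqP; rewrite eq_sym subr_eq addrC -h.
    rewrite er intrB intrM intrN -natz_C; ring.
  exact: latD hkp (latZ _ hd).
case: r r0 rd hr => [n|n] //= _ nd hr.
case: n nd hr => [//|n] nd hr.
exfalso; apply: (hk n.+1) => //.
Qed.

Lemma mul_ord {R : realType} (e1 e2 p : R[i]) (d : nat) (k : int) :
  (d%:Z %| k)%Z -> lattice1 e1 e2 (d%:R * p) -> lattice1 e1 e2 (k%:~R * p).
Proof.
move=> /dvdzP [q ->] hd.
have -> : (q * d%:Z)%:~R * p = q%:~R * (d%:R * p) by rewrite intrM -natz_C; ring.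
exact: latZ.
Qed.

Lemma bezout3 {R : realType} (e1 e2 p : R[i]) (d : nat) (m n : int) :
  (0 < d)%N -> has_order (lattice1 e1 e2) p d ->
  d%:R * p = m%:~R * e1 + n%:~R * e2 ->
  exists u v t : int, u * m + v * n + t * d%:Z = 1.
Proof.
move=> d0 [hd hk] hdp.
set g := gcdz (gcdz m n) d%:Z.
have gm : (g %| m)%Z := dvdz_trans (dvdz_gcdl _ _) (dvdz_gcdl _ _).
have gn : (g %| n)%Z := dvdz_trans (dvdz_gcdl _ _) (dvdz_gcdr _ _).
have gd : (g %| d%:Z)%Z := dvdz_gcdr _ _.
case g1: (g == 1).
  have [u1 [v1 h1]] := Bezoutz (gcdz m n) d%:Z.
  have [u2 [v2 h2]] := Bezoutz m n.
  exists (u1*u2), (u1*v2), v1.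
  by rewrite -[RHS](eqP g1) /g -h1 -h2; ring.
exfalso.
have g0 : 0 <= g by rewrite /g /gcdz.
have gn0 : g != 0.
  by rewrite /g gcdz_eq0 negb_and eqz_nat; apply/orP; right; rewrite -lt0n.
have [q dq] := dvdzP gd.
have [m' em] := dvdzP gm.
have [n' en] := dvdzP gn.
have q0 : 0 < q.
  move: dq g0 gn0 d0; clear; lia.
have qd : q < d%:Z.
  move/negbT: g1 => g1; move: dq g0 gn0 g1 d0 q0; clear; nia.
case: q dq q0 qd => [qn|qn] dq q0 qd; last by [].
apply: (hk qn).
  apply/andP; split; [by move: q0; rewrite ltz_nat | by move: qd; rewrite ltz_nat].
have -> : qn%:R * p = m'%:~R * e1 + n'%:~R * e2.
  have gC : (g%:~R : R[i]) != 0 by rewrite intr_eq0.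
  apply: (mulfI gC).
  have : (d%:Z)%:~R * p = ((m' * g)%:~R * e1 + (n' * g)%:~R * e2 :> R[i]).
    by rewrite natz_C hdp -em -en.
  rewrite dq !intrM -natz_C => h.
  by rewrite mulrDr !mulrA ![g%:~R * _]mulrC -h; ring.
exists m', n'; done.
Qed.


Definition dual1 {R : realType} (L : R[i] -> Prop) (w : R[i]) : Prop :=
  forall z, L z -> is_integer (imC (w * Num.conj z)).

Lemma p_expr {R : realType} (e1 e2 p : R[i]) (d : nat) (m n : int) :
  (0 < d)%N -> d%:R * p = m%:~R * e1 + n%:~R * e2 ->
  p = ((d%:R : R)^-1)%:C%C * (m%:~R * e1 + n%:~R * e2).
Proof.
move=> d0 h; rewrite -h mulrA.
have -> : (d%:R : R[i]) = (d%:R : R)%:C%C by rewrite -(rmorph_nat (real_complex R)).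
rewrite -rmorphM /= mulVf ?mul1r //.
by rewrite pnatr_eq0 -lt0n.
Qed.

Lemma claimA {R : realType} (e1 e2 p : R[i]) (d : nat) (z : R[i]) :
  (0 < d)%N -> lattice_basis e1 e2 -> has_order (lattice1 e1 e2) p d ->
  quot_lattice1 (lattice1 e1 e2) p z ->
  dual1 (quot_lattice1 (lattice1 e1 e2) p)
    (((d%:R : R) / imC (e1 * Num.conj e2))%:C%C * z).
Proof.
move=> d0 hb hord [x [k [[a [b ->]] ->]]] z' [x' [k' [[a' [b' ->]] ->]]].
have DD := basis_D _ _ hb.
have [m [n hdp]] := hord.1.
have ep := p_expr _ _ _ _ _ _ d0 hdp.
exists (d%:Z * (a * b' - b * a') + (a * k' * n + k * m * b' - b * k' * m - k * n * a')).
rewrite ep.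
have dn0 : (d%:R : R) != 0 by rewrite pnatr_eq0 -lt0n.
move: DD; cnorm => DD.
rewrite !(intrD, intrM, intrN, intrB).
field.
by rewrite DD dn0.
Qed.

Lemma claimB {R : realType} (e1 e2 p : R[i]) (d : nat) (w : R[i]) :
  (0 < d)%N -> lattice_basis e1 e2 -> has_order (lattice1 e1 e2) p d ->
  dual1 (quot_lattice1 (lattice1 e1 e2) p) w ->
  quot_lattice1 (lattice1 e1 e2) p
    ((imC (e1 * Num.conj e2) / (d%:R : R))%:C%C * w).
Proof.
move=> d0 hb hord hw.
have DD := basis_D _ _ hb.
have hL : forall y, lattice1 e1 e2 y -> is_integer (imC (w * Num.conj y)).
  move=> y hy; apply: hw; exists y, 0; split => //; by rewrite mul0r addr0.
have [al [be hab]] := dual_in_lat _ _ _ hL.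
have [c hc] : is_integer (imC (w * Num.conj p)).
  apply: hw; exists 0, 1; split; first exact: lat0.
  by rewrite add0r mul1r.
have [m [n hdp]] := hord.1.
have ep := p_expr _ _ _ _ _ _ d0 hdp.
have [u [v [t hbz]]] := bezout3 _ _ _ _ _ _ d0 hord hdp.
have dn0 : (d%:R : R) != 0 by rewrite pnatr_eq0 -lt0n.
have ew : w = ((imC (e1 * Num.conj e2))^-1)%:C%C * (al%:~R * e1 + be%:~R * e2).
  by rewrite -hab mulrA -rmorphM /= mulVf ?mul1r.
have hc' : al * n - be * m = d%:Z * c.
  apply: (@intr_inj R); rewrite [in RHS]intrM -hc ew ep.
  move: DD; cnorm => DD.
  rewrite !(intrD, intrM, intrN, intrB).
  field.
  by rewrite DD dn0.
set k := u * al + v * be.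
set A := v * c + al * t.
set B := - (u * c) + be * t.
have eA : al = d%:Z * A + k * m.
  have e : al - (v * (al * n - be * m) + al * t * d%:Z + (u * al + v * be) * m)
           = al * (1 - (u * m + v * n + t * d%:Z)) by ring.
  rewrite hbz subrr mulr0 hc' in e.
  move/eqP: e; rewrite subr_eq0 => /eqP ->.
  rewrite /A /k; ring.
have eB : be = d%:Z * B + k * n.
  have e : be - (- u * (al * n - be * m) + be * t * d%:Z + (u * al + v * be) * n)
           = be * (1 - (u * m + v * n + t * d%:Z)) by ring.
  rewrite hbz subrr mulr0 hc' in e.
  move/eqP: e; rewrite subr_eq0 => /eqP ->.
  rewrite /B /k; ring.
exists (A%:~R * e1 + B%:~R * e2), k; split; first by exists A, B.
rewrite ew ep eA eB.
move: DD; cnorm => DD.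
apply: ceq; cnorm; rewrite !(intrD, intrM, intrN, intrB); field; by rewrite DD dn0.
Qed.

Lemma curve_iso {R : realType} (e1 e2 p a : R[i]) (d : nat) :
  (0 < d)%N -> lattice_basis e1 e2 -> has_order (lattice1 e1 e2) p d -> a != 0 ->
  (forall w, dual1 (quot_lattice1 (lattice1 e1 e2) p) w <->
     exists y, lattice1 e1 e2 y /\ w = a * y) ->
  iso1 (quot_lattice1 (lattice1 e1 e2) p) (lattice1 e1 e2).
Proof.
move=> d0 hb hord a0 H.
have DD := basis_D _ _ hb.
have dn0 : (d%:R : R) != 0 by rewrite pnatr_eq0 -lt0n.
set D := imC (e1 * Num.conj e2) in DD.
set s := ((d%:R : R) / D)%:C%C.
set s' := (D / (d%:R : R))%:C%C.
have ss : s' * s = 1.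
  by rewrite /s /s' -rmorphM /= mulrA divfK // divff.
have s0 : s != 0.
  apply/negP => /eqP h; move: ss; rewrite h mulr0 => /eqP; rewrite eq_sym oner_eq0.
  done.
exists (s / a); split; first by rewrite mulf_neq0 ?invr_eq0.
move=> z; split.
  move=> hz.
  have hd : dual1 (quot_lattice1 (lattice1 e1 e2) p) (a * z) by apply/H; exists z.
  have := claimB _ _ _ _ _ d0 hb hord hd; rewrite -/D -/s' => hy.
  exists (s' * (a * z)); split => //.
  have -> : s / a * (s' * (a * z)) = (s' * s) * (a / a) * z by ring.
  by rewrite ss divff // !mul1r.
move=> [y [hy ->]].
have := claimA _ _ _ _ _ d0 hb hord hy; rewrite -/D -/s => /H [y'' [hy'' e]].
have -> : s / a * y = (s * y) / a by ring.
by rewrite e mulrC mulrA mulVf // mul1r.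
Qed.


Lemma vec2_mul {R : realType} (x y : R[i]) (M : 'M[R[i]]_2) :
  vec2 x y *m M = vec2 (x * M 0 0 + y * M 1 0) (x * M 0 1 + y * M 1 1).
Proof.
apply/rowP => j; rewrite !mxE !big_ord_recr big_ord0 /vec2 !mxE /= add0r.
have e0 : widen_ord (leqnSn 1) (@ord_max 0) = 0 :> 'I_2 by apply/val_inj.
have e1 : (@ord_max 1) = 1 :> 'I_2 by apply/val_inj.
rewrite e0 e1; case: j => [[|[|k]]] Hj //=.
  by have -> : Ordinal Hj = 0 :> 'I_2 by apply/val_inj.
by have -> : Ordinal Hj = 1 :> 'I_2 by apply/val_inj.
Qed.

Lemma vec2_inj {R : realType} (x y x' y' : R[i]) :
  vec2 x y = vec2 x' y' -> x = x' /\ y = y'.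
Proof.
move=> h; split.
  by have := congr1 (fun v : 'rV_2 => v 0 0) h; rewrite /vec2 !mxE.
by have := congr1 (fun v : 'rV_2 => v 0 1) h; rewrite /vec2 !mxE.
Qed.

Lemma pair_vec2 {R : realType} (a b x y : R[i]) :
  antilin_pair (vec2 a b) (vec2 x y) = a * Num.conj x + b * Num.conj y.
Proof. by rewrite /antilin_pair !big_ord_recr big_ord0 /vec2 !mxE /= add0r. Qed.

Lemma unit_row {R : realType} (M : 'M[R[i]]_2) x y :
  M \in unitmx -> vec2 x y *m M = vec2 0 0 -> x = 0 /\ y = 0.
Proof.
move=> hM h.
have := mulmxK hM (vec2 x y); rewrite h vec2_mul !mul0r !addr0.
by move/vec2_inj => [<- <-].
Qed.


Lemma DC_neq0 {R : realType} (D : R) : D != 0 -> D%:C%C != 0 :> R[i].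
Proof. by move=> hD; apply/negP => /eqP /(congr1 (@complex.Re R)) /= h; move/eqP: hD. Qed.

Theorem theorem2p5 (R : realType) (d : nat) (e1 e2 f1 f2 p q : R[i]) :
  (1 < d)%N ->
  lattice_basis e1 e2 -> lattice_basis f1 f2 ->
  ~ isogenous1 (lattice1 e1 e2) (lattice1 f1 f2) ->
  has_order (lattice1 e1 e2) p d ->
  has_order (lattice1 f1 f2) q d ->
  (~ iso1 (quot_lattice1 (lattice1 e1 e2) p) (lattice1 e1 e2) \/
   ~ iso1 (quot_lattice1 (lattice1 f1 f2) q) (lattice1 f1 f2)) ->
  let LA := quot_lattice2 (lattice1 e1 e2) (lattice1 f1 f2) p q in
  ~ iso2 LA (dual_lattice2 LA).
Proof.
move=> d1 hbE hbF niso hp hq hor LA [M [hM hiso]].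
have d0 : (0 < d)%N by apply: ltnW.
have fwd : forall u, LA u -> dual_lattice2 LA (u *m M).
  by move=> u hu; apply/hiso; exists u.
have LAx : forall x, lattice1 e1 e2 x -> LA (vec2 x 0).
  move=> x hx; exists x, 0, 0; split => //; split; first exact: lat0.
  by rewrite !mul0r !addr0.
have LAy : forall y, lattice1 f1 f2 y -> LA (vec2 0 y).
  move=> y hy; exists 0, y, 0; split; first exact: lat0; split => //.
  by rewrite !mul0r !addr0.
have DF := DC_neq0 _ (basis_D _ _ hbF).
have M01 : M 0 1 = 0.
  apply/eqP; apply/negPn/negP => h; apply: niso.
  exists ((imC (f1 * Num.conj f2))%:C%C * M 0 1); split; first by rewrite mulf_neq0.
  move=> z hz; rewrite -mulrA [M 0 1 * z]mulrC; apply: dual_in_lat => y hy.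
  have := fwd _ (LAx _ hz) _ (LAy _ hy).
  by rewrite vec2_mul pair_vec2 conjC0 !(mulr0, mul0r, addr0, add0r).
have M10 : M 1 0 = 0.
  apply/eqP; apply/negPn/negP => h; apply: niso.
  exists ((imC (f1 * Num.conj f2))%:C%C * Num.conj (M 1 0)); split.
    by rewrite mulf_neq0 // conjC_eq0.
  move=> z hz; rewrite -mulrA [Num.conj (M 1 0) * z]mulrC; apply: dual_in_lat => y hy.
  have := fwd _ (LAy _ hy) _ (LAx _ hz).
  rewrite vec2_mul pair_vec2 conjC0 !(mulr0, mul0r, addr0, add0r) => -[n hn].
  exists (- n); rewrite intrN -hn; cnorm; ring.
have a0 : M 0 0 != 0.
  apply/negP => /eqP h.
  have e : vec2 (1 : R[i]) 0 *m M = vec2 0 0.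
    by rewrite vec2_mul h M01 !(mulr0, mul0r, addr0, add0r).
  by have [/eqP] := unit_row _ _ _ hM e; rewrite oner_eq0.
have b0 : M 1 1 != 0.
  apply/negP => /eqP h.
  have e : vec2 0 (1 : R[i]) *m M = vec2 0 0.
    by rewrite vec2_mul h M10 !(mulr0, mul0r, addr0, add0r).
  by have [_ /eqP] := unit_row _ _ _ hM e; rewrite oner_eq0.
case: hor => hor; apply: hor.
- apply: (curve_iso _ _ _ _ _ d0 hbE hp a0) => w; split.
    move=> hw.
    have hv : dual_lattice2 LA (vec2 w 0).
      move=> v [x [y [k [hx [hy ->]]]]].
      rewrite pair_vec2 mul0r addr0; apply: hw; by exists x, k.
    have [u [hu e]] := (hiso _).1 hv.
    case: hu e => x [y [k [hx [hy ->]]]].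
    rewrite vec2_mul M01 M10 !(mulr0, mul0r, addr0, add0r) => /vec2_inj [ew e0].
    have : (y + k%:~R * q) == 0.
      by move: e0 => /esym /eqP; rewrite mulf_eq0 (negbTE b0) orbF.
    move/eqP => hyk.
    have hkq : lattice1 f1 f2 (k%:~R * q).
      have -> : k%:~R * q = - y by apply/eqP; rewrite -addr_eq0 addrC hyk.
      exact: latN.
    have hkp := mul_ord _ _ _ _ _ (ord_dvd _ _ _ _ _ d0 hq hkq) hp.1.
    exists (x + k%:~R * p); split; first exact: latD.
    by rewrite ew mulrC.
  move=> [y [hy ->]] z [x [k [hx ->]]].
  have hv : LA (vec2 (x + k%:~R * p) (0 + k%:~R * q)).
    by exists x, 0, k; split => //; split => //; exact: lat0.
  have := fwd _ (LAx _ hy) _ hv.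
  by rewrite vec2_mul pair_vec2 M01 M10 !(mulr0, mul0r, addr0, add0r) [M 0 0 * y]mulrC.
- apply: (curve_iso _ _ _ _ _ d0 hbF hq b0) => w; split.
    move=> hw.
    have hv : dual_lattice2 LA (vec2 0 w).
      move=> v [x [y [k [hx [hy ->]]]]].
      rewrite pair_vec2 mul0r add0r; apply: hw; by exists y, k.
    have [u [hu e]] := (hiso _).1 hv.
    case: hu e => x [y [k [hx [hy ->]]]].
    rewrite vec2_mul M01 M10 !(mulr0, mul0r, addr0, add0r) => /vec2_inj [e0 ew].
    have : (x + k%:~R * p) == 0.
      by move: e0 => /esym /eqP; rewrite mulf_eq0 (negbTE a0) orbF.
    move/eqP => hxk.
    have hkp : lattice1 e1 e2 (k%:~R * p).
      have -> : k%:~R * p = - x by apply/eqP; rewrite -addr_eq0 addrC hxk.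
      exact: latN.
    have hkq := mul_ord _ _ _ _ _ (ord_dvd _ _ _ _ _ d0 hp hkp) hq.1.
    exists (y + k%:~R * q); split; first exact: latD.
    by rewrite ew mulrC.
  move=> [y [hy ->]] z [x [k [hx ->]]].
  have hv : LA (vec2 (0 + k%:~R * p) (x + k%:~R * q)).
    by exists 0, x, k; split; first exact: lat0.
  have := fwd _ (LAy _ hy) _ hv.
  by rewrite vec2_mul pair_vec2 M01 M10 !(mulr0, mul0r, addr0, add0r) [M 1 1 * y]mulrC.
Qed.
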